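(* Let $(C,M)$ be an instance of 2-SBCM with $|C|=3$ characters and $n\ge 1$ meetings in which no two consecutive meetings of $M$ are equal. Then it has a solution using at most $\lceil n/2\rceil-1$ block crossings.
   Context: A storyline instance is a pair $(C,M)$ where $C=\{1,\dots,k\}$ is a set of characters and $M=[m_1,\dots,m_n]$ is a sequence of meetings with $m_i\subseteq C$; in 2-SBCM every meeting has exactly two characters. A permutation of $C$ lists each character exactly once. For $1\le a\le b<c\le k$, the block crossing $(a,b,c)$ maps $\langle \pi_1,\dots,\pi_k\rangle$ to $\langle \pi_1,\dots,\pi_{a-1},\pi_{b+1},\dots,\pi_c,\pi_a,\dots,\pi_b,\pi_{c+1},\dots,\pi_k\rangle$. A meeting fits (is supported by) a permutation if its characters occupy consecutive positions. A solution is a start permutation $\pi^0$ and sequences $B_1,\dots,B_n$ of block crossings (possibly empty) such that, with $\pi^i$ obtained by applying $B_i$ in order to $\pi^{i-1}$, $\pi^i$ supports $m_i$ for all $i$; its number of block crossings is $\sum_i|B_i|$. *)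

(* Defs.v *)
From mathcomp Require Import all_boot.
Set Implicit Arguments. Unset Strict Implicit. Unset Printing Implicit Defensive.

(* Positions in a permutation are 1-indexed as in the paper. *)

Definition is_perm (k : nat) (p : seq 'I_k) : Prop := perm_eq p (enum 'I_k).

Definition valid_bc (k : nat) (t : nat * nat * nat) : bool :=
  let: (a, b, c) := t in [&& 1 <= a, a <= b, b < c & c <= k].

(* <p_1..p_{a-1}, p_{b+1}..p_c, p_a..p_b, p_{c+1}..p_k> *)
Definition apply_bc (T : Type) (t : nat * nat * nat) (p : seq T) : seq T :=
  let: (a, b, c) := t in
  take a.-1 p ++ drop b (take c p) ++ drop a.-1 (take b p) ++ drop c p.

Definition apply_bcs (T : Type) (B : seq (nat * nat * nat)) (p : seq T) : seq T :=
  foldl (fun q t => apply_bc t q) p B.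

Definition supports (k : nat) (p : seq 'I_k) (m : {set 'I_k}) : Prop :=
  exists i l : nat, [set x in take l (drop i p)] = m.

Definition perm_at (k : nat) (p0 : seq 'I_k) (Bs : seq (seq (nat * nat * nat)))
  (i : nat) : seq 'I_k :=
  apply_bcs (flatten (take i Bs)) p0.

Definition is_solution (k : nat) (M : seq {set 'I_k}) (p0 : seq 'I_k)
  (Bs : seq (seq (nat * nat * nat))) : Prop :=
  [/\ is_perm p0, size Bs = size M,
      all (all (@valid_bc k)) Bs &
      forall i, i < size M -> supports (perm_at p0 Bs i.+1) (nth set0 M i)].

Definition num_bc (Bs : seq (seq (nat * nat * nat))) : nat := sumn (map size Bs).

Definition two_sbcm (k : nat) (M : seq {set 'I_k}) : Prop :=
  all (fun m : {set 'I_k} => #|m| == 2) M.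

Definition no_consecutive_equal (k : nat) (M : seq {set 'I_k}) : Prop :=
  forall i, i.+1 < size M -> nth set0 M i != nth set0 M i.+1.

(* Main.v *)
Require Import Defs.
From mathcomp Require Import all_boot.
Definition o0 : 'I_3 := @Ordinal 3 0 (erefl true).
Definition o1 : 'I_3 := @Ordinal 3 1 (erefl true).
Definition o2 : 'I_3 := @Ordinal 3 2 (erefl true).
Definition ords := [:: o0; o1; o2].
Definition adjb (p : seq 'I_3) (a b : 'I_3) : bool :=
  has (fun i => ((nth a p i == a) && (nth a p i.+1 == b)) || ((nth a p i == b) && (nth a p i.+1 == a))) (iota 0 2).
Definition cands : seq (seq (nat*nat*nat)) := [:: [::]; [:: (1,1,2)]; [:: (2,2,3)]].
Definition goodB (p : seq 'I_3) a b c d (B : seq (nat*nat*nat)) :=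
  [&& all (@valid_bc 3) B, size B <= 1, perm_eq (apply_bcs B p) ords,
      adjb (apply_bcs B p) a b & adjb (apply_bcs B p) c d].
Lemma bf : all (fun p => all (fun a => all (fun b => all (fun c => all (fun d =>
   (a != b) && (c != d) ==> has (goodB p a b c d) cands) ords) ords) ords) ords) (permutations ords).
Proof. vm_compute. reflexivity. Qed.

Lemma mem_ords (x : 'I_3) : x \in ords.
Proof. case: x => [[|[|[|m]]] Hm] //; by rewrite /ords !inE; apply/or3P;
  [constructor 1|constructor 2|constructor 3]; apply/eqP; apply: val_inj. Qed.

Lemma adj_supports (p : seq 'I_3) a b : size p = 3 -> adjb p a b -> supports p [set a; b].
Proof.
case: p => [|x [|y [|z [|w q]]]] //= _.
rewrite /adjb /= orbF => /orP [] H; [exists 0, 2 | exists 1, 2]; move: H => /=;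
 (case/orP=> /andP[/eqP-> /eqP->]; apply/setP=> u; rewrite !inE //; by rewrite orbC).
Qed.

Lemma step (p : seq 'I_3) (m1 m2 : {set 'I_3}) :
  perm_eq p ords -> #|m1| == 2 -> #|m2| == 2 ->
  exists B, [/\ all (@valid_bc 3) B, size B <= 1, perm_eq (apply_bcs B p) ords,
    supports (apply_bcs B p) m1 & supports (apply_bcs B p) m2].
Proof.
move=> Hp /cards2P [a [b [ab ->]]] /cards2P [c [d [cd ->]]].
have := allP bf p; rewrite mem_permutations => /(_ Hp).
move/allP/(_ a (mem_ords a))/allP/(_ b (mem_ords b))/allP/(_ c (mem_ords c))
  /allP/(_ d (mem_ords d)); rewrite ab cd andbT implyTb => /hasP [B _].
rewrite /goodB => /and5P [H1 H2 H3 H4 H5]; exists B; split => //.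
- by apply: adj_supports => //; rewrite (perm_size H3).
- by apply: adj_supports => //; rewrite (perm_size H3).
Qed.

Arguments step {p m1 m2}.
Definition sol (M : seq {set 'I_3}) (p : seq 'I_3) Bs :=
  [/\ size Bs = size M, all (all (@valid_bc 3)) Bs &
      forall i, i < size M -> supports (perm_at p Bs i.+1) (nth set0 M i)].

Lemma perm_at_cons2 (p : seq 'I_3) B Bs i :
  perm_at p (B :: [::] :: Bs) i.+2 = perm_at (apply_bcs B p) Bs i.
Proof. by rewrite /perm_at /= /apply_bcs foldl_cat. Qed.

Lemma R n : forall (M : seq {set 'I_3}) p, size M <= n -> two_sbcm M -> perm_eq p ords ->
  exists Bs, sol M p Bs /\ num_bc Bs <= uphalf (size M).
Proof.
elim: n => [|n IH] [|m1 [|m2 rest]] p //= Hs.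
- by move=> _ _; exists [::]; split => //; split.
- by move=> _ _; exists [::]; split => //; split.
- move=> /andP [Hm1 _] Hp.
  have [B [H1 H2 H3 H4 _]] := step Hp Hm1 Hm1.
  exists [:: B]; split; last by rewrite /num_bc /= addn0.
  split => //=; first by rewrite H1.
  by case=> // _; rewrite /perm_at /= ?cats0.
- move=> /and3P [Hm1 Hm2 Hr] Hp.
  have [B [H1 H2 H3 H4 H5]] := step Hp Hm1 Hm2.
  have [|Bs [[S1 S2 S3] Sc]] := IH rest (apply_bcs B p) _ Hr H3.
    by move: Hs; rewrite ltnS => /ltnW.
  exists [:: B, [::] & Bs]; split.
    split => /=; first by rewrite S1.
    - by rewrite H1 S2.
    case=> [_|[_|i Hi]].
    - by rewrite /perm_at /= ?cats0.
    - by rewrite /perm_at /= take0 ?cats0.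
    by rewrite (perm_at_cons2 p B Bs i.+1); apply: S3.
  rewrite /num_bc /= add0n.
  by rewrite -addn1 addnC leq_add.
Qed.

Theorem lemma5 (M : seq {set 'I_3}) :
  two_sbcm M -> 1 <= size M -> no_consecutive_equal M ->
  exists (p0 : seq 'I_3) (Bs : seq (seq (nat * nat * nat))),
    is_solution M p0 Bs /\ num_bc Bs <= (uphalf (size M)).-1.
Proof.
case: M => [|m1 rest] //= /andP [Hm1 Hr] _ _.
have Hp0 : perm_eq ords ords by [].
have Hm2 : #|head m1 rest| == 2 by case: rest Hr => //= m2 ? /andP[].
have [B [_ _ H3 H4 H5]] := step Hp0 Hm1 Hm2.
have Hperm : is_perm (apply_bcs B ords).
  rewrite /is_perm (perm_trans H3) //.
  apply: uniq_perm => //; first exact: enum_uniq.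
  by move=> x; rewrite mem_enum mem_ords.
exists (apply_bcs B ords).
case: rest Hr H5 {Hm2} => [|m2 rest] Hr H5.
  exists [:: [::]]; split => //; split => //.
  by case=> // _; rewrite /perm_at /=.
move: Hr => /= /andP [_ Hr].
have [Bs [[S1 S2 S3] Sc]] := @R (size rest) rest _ (leqnn _) Hr H3.
exists [:: [::], [::] & Bs]; split.
  split => //=; first by rewrite S1.
  case=> [_|[_|i Hi]].
  - by rewrite /perm_at /=.
  - by rewrite /perm_at /= take0; exact: H5.
  by rewrite (perm_at_cons2 _ [::] Bs i.+1) /=; apply: S3.
by rewrite /num_bc /=.
Qed.
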